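(* For all integers $k,l\ge2$, $La^*([k]\times[l],\vee_3)=2(k+l)-4$.
   Context: $[k]\times[l]$ is ordered coordinatewise. $\vee_3$ is the poset on four elements $a,b_1,b_2,b_3$ whose only relations are $a<b_i$, $i=1,2,3$. For posets $P,R$, $P$ is a strong subposet of $R$ if there is an injection $i:P\to R$ with $p\le_P p'\iff i(p)\le_R i(p')$. A subset $F\subseteq Q$ is strong $P$-free if $P$ is not a strong subposet of $F$ with the induced order; $La^*(Q,P)$ is the maximum size of a strong $P$-free subset of $Q$. *)

(* Defs.v *)
From mathcomp Require Import all_boot.
Set Implicit Arguments. Unset Strict Implicit. Unset Printing Implicit Defensive.

(* The grid [k] x [l]: elements (i,j) with i in {0..k-1}, j in {0..l-1}
   (a relabelling of {1..k} x {1..l}), ordered coordinatewise. *)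
Definition grid (k l : nat) : finType := ('I_k * 'I_l)%type.

Definition grid_le (k l : nat) (x y : grid k l) : bool :=
  (x.1 <= y.1)%N && (x.2 <= y.2)%N.

(* The poset V_3 on four elements a = 0, b_1 = 1, b_2 = 2, b_3 = 3,
   whose only strict relations are a < b_i. *)
Definition vee3_le (x y : 'I_4) : bool := (x == y) || (val x == 0%N).

Definition strong_subposet_in (P R : finType) (leP : rel P) (leR : rel R)
  (F : {set R}) : Prop :=
  exists i : P -> R,
    injective i /\ (forall p, i p \in F) /\
    (forall p p', leP p p' = leR (i p) (i p')).

Definition strong_vee3_free (k l : nat) (F : {set grid k l}) : Prop :=
  ~ strong_subposet_in vee3_le (@grid_le k l) F.

Definition is_La_star_grid_vee3 (k l m : nat) : Prop :=
  (exists F : {set grid k l}, strong_vee3_free F /\ #|F| = m) /\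
  (forall F : {set grid k l}, strong_vee3_free F -> (#|F| <= m)%N).

(* Main.v *)
Require Import Defs.
From mathcomp Require Import all_boot.
From mathcomp Require Import zify.
From Stdlib Require Import Lia.
Set Implicit Arguments. Unset Strict Implicit. Unset Printing Implicit Defensive.


Definition sh (r y : nat) := if y < r then y else y.+1.

Lemma sum_del (f : nat -> nat) n r : r <= n ->
  \sum_(0 <= y < n.+1) f y = f r + \sum_(0 <= y < n) f (sh r y).
Proof.
elim: n r => [|n IH] r hr.
  have -> : r = 0 by lia.
  by rewrite big_nat1 big_geq // addn0.
rewrite big_nat_recr //=.
case: (ltnP r n.+1) => h.
  rewrite (IH r) // [in RHS]big_nat_recr //= /sh.
  have -> : (n < r) = false by lia.
  by rewrite addnA.
have -> : r = n.+1 by lia.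
rewrite addnC; congr (_ + _); apply: eq_big_nat => y /andP [_ hy].
by rewrite /sh hy.
Qed.

Lemma sum_eq1 (n a : nat) : \sum_(0 <= y < n) ((y == a) : nat) = (a < n).
Proof.
elim: n => [|n IH]; first by rewrite big_geq.
rewrite big_nat_recr //= IH.
idtac.
case: (ltngtP a n) => h /=.
- by rewrite ltnS ltnW.
- by rewrite ltnS leqNgt h.
- by rewrite h ltnSn.
Qed.


Definition cntN K L (G : nat -> nat -> bool) := \sum_(0 <= x < K) \sum_(0 <= y < L) (G x y : nat).
Definition lnk L (Lam : nat -> bool) := \sum_(0 <= y < L) (Lam y : nat).
Definition rowc K (G : nat -> nat -> bool) r := \sum_(0 <= x < K) (G x r : nat).
Definition linked (Lam : nat -> bool) r := ((0 < r) && Lam r.-1) || Lam r.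
Definition freeN (G : nat -> nat -> bool) := forall a1 a2 x1 y1 x2 y2 x3 y3,
  G a1 a2 -> G x1 y1 -> G x2 y2 -> G x3 y3 -> a1 <= x1 -> a2 <= y3 ->
  x1 < x2 -> x2 < x3 -> y3 < y2 -> y2 < y1 -> False.
Definition validN (G : nat -> nat -> bool) (Lam : nat -> bool) := forall px py qx qy,
  G px py -> G qx qy -> py < qy -> (forall g, py <= g -> g < qy -> Lam g) -> px <= qx.

Definition delG r (G : nat -> nat -> bool) x y := G x (sh r y).
Definition delL r (Lam : nat -> bool) y :=
  if y.+1 < r then Lam y else if y.+1 == r then Lam y && Lam r else Lam y.+1.

Lemma sh_mono r a b : a <= b -> sh r a <= sh r b.
Proof. rewrite /sh; case: (ltnP a r); case: (ltnP b r); lia. Qed.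
Lemma sh_smono r a b : a < b -> sh r a < sh r b.
Proof. rewrite /sh; case: (ltnP a r); case: (ltnP b r); lia. Qed.

Lemma delG_free r G : freeN G -> freeN (delG r G).
Proof.
move=> hf a1 a2 x1 y1 x2 y2 x3 y3 h0 h1 h2 h3 e1 e2 e3 e4 e5 e6.
exact: (hf a1 (sh r a2) x1 (sh r y1) x2 (sh r y2) x3 (sh r y3) h0 h1 h2 h3 e1
  (sh_mono r e2) e3 e4 (sh_smono r e5) (sh_smono r e6)).
Qed.

Lemma delL_lt r Lam y : y.+1 < r -> delL r Lam y = Lam y.
Proof. by rewrite /delL => ->. Qed.
Lemma delL_eq r Lam y : y.+1 = r -> delL r Lam y = Lam y && Lam r.
Proof. by move=> h; rewrite /delL h ltnn eqxx. Qed.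
Lemma delL_gt r Lam y : r < y.+1 -> delL r Lam y = Lam y.+1.
Proof.
move=> h; rewrite /delL.
have -> : (y.+1 < r) = false by lia.
by have -> : (y.+1 == r) = false by lia.
Qed.

Lemma delG_valid r G Lam : validN G Lam -> validN (delG r G) (delL r Lam).
Proof.
move=> hv px py qx qy hp hq hlt hpath.
apply: (hv px (sh r py) qx (sh r qy) hp hq (sh_smono r hlt)) => g h1 h2.
have hgt : r < g -> Lam g.
  move=> hg.
  have := hpath g.-1 ltac:(move: h1 h2; rewrite /sh; case: (ltnP py r); case: (ltnP qy r); lia)
                      ltac:(move: h1 h2; rewrite /sh; case: (ltnP py r); case: (ltnP qy r); lia).
  by rewrite delL_gt; [have -> : g.-1.+1 = g by lia | lia].
case: (ltngtP g r) => hgr.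
- have hpr : py < r by move: h1; rewrite /sh; case: (ltnP py r); lia.
  have hpy : py <= g by move: h1; rewrite /sh hpr.
  have hqy : g < qy by move: h2; rewrite /sh; case: (ltnP qy r); lia.
  have := hpath g hpy hqy.
  case: (ltngtP g.+1 r) => h3.
  + by rewrite delL_lt.
  + lia.
  + by rewrite delL_eq // => /andP [].
- exact: hgt.
- have hpr : py < r by move: h1; rewrite /sh; case: (ltnP py r); lia.
  have hqr : r <= qy by move: h2; rewrite /sh; case: (ltnP qy r); lia.
  have := hpath r.-1 ltac:(lia) ltac:(lia).
  by rewrite delL_eq; [rewrite hgr => /andP [] | lia].
Qed.

Lemma delG_supp K n r (G : nat -> nat -> bool) : r < n.+2 ->
  (forall x y, G x y -> (x < K) && (y < n.+2)) ->
  forall x y, delG r G x y -> (x < K) && (y < n.+1).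
Proof.
move=> hr hs x y; rewrite /delG => /hs /andP [hx hy]; rewrite hx /=.
by move: hy; rewrite /sh; case: (ltnP y r); lia.
Qed.

Lemma delL_bnd n r (Lam : nat -> bool) : r < n.+2 -> (forall y, Lam y -> y.+1 < n.+2) ->
  forall y, delL r Lam y -> y.+1 < n.+1.
Proof.
move=> hr hb y; case: (ltngtP y.+1 r) => h.
- rewrite delL_lt // => /hb; lia.
- rewrite delL_gt // => /hb; lia.
- rewrite delL_eq // => /andP [_ /hb]; lia.
Qed.

Lemma delG_cnt K n r (G : nat -> nat -> bool) : r < n.+2 ->
  cntN K n.+2 G = cntN K n.+1 (delG r G) + rowc K G r.
Proof.
move=> hr; rewrite /cntN /rowc -big_split /=.
apply: eq_bigr => x _.
by rewrite (@sum_del (fun y => (G x y : nat)) n.+1 r) // addnC.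
Qed.

Lemma delL_lnk n r (Lam : nat -> bool) : r < n.+2 ->
  lnk n.+2 Lam <= lnk n.+1 (delL r Lam) + linked Lam r.
Proof.
move=> hr; rewrite /lnk (@sum_del (fun y => (Lam y : nat)) n.+1 r) //.
set c := ((0 < r) && Lam r.-1 && ~~ Lam r).
have h1 : \sum_(0 <= y < n.+1) (Lam (sh r y) : nat) <=
          \sum_(0 <= y < n.+1) ((delL r Lam y : nat) + (y == r.-1) * c).
  apply: leq_sum => y _.
  rewrite /sh /c; case: (ltngtP y.+1 r) => h.
  - by rewrite delL_lt // leq_addr.
  - by rewrite delL_gt // leq_addr.
  - rewrite delL_eq //.
    have -> : y == r.-1 by lia.
    have -> : 0 < r by lia.
    have -> : r.-1 = y by lia.
    by case: (Lam y); case: (Lam r).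
rewrite big_split /= in h1.
have h2 : \sum_(0 <= y < n.+1) ((y == r.-1) * c) <= c.
  rewrite -big_distrl /= sum_eq1.
  by case: (r.-1 < n.+1); rewrite ?mul1n ?mul0n.
have h3 : (Lam r : nat) + c <= linked Lam r.
  by rewrite /c /linked; case: (Lam r); case: (0 < r); case: (Lam r.-1).
lia.
Qed.

Definition delC (G : nat -> nat -> bool) x y := G x.+1 y.

Lemma delC_free G : freeN G -> freeN (delC G).
Proof.
move=> hf a1 a2 x1 y1 x2 y2 x3 y3 h0 h1 h2 h3 e1 e2 e3 e4 e5 e6.
exact: (hf a1.+1 a2 x1.+1 y1 x2.+1 y2 x3.+1 y3 h0 h1 h2 h3 e1 e2 e3 e4 e5 e6).
Qed.

Lemma delC_supp K L (G : nat -> nat -> bool) :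
  (forall x y, G x y -> (x < K.+1) && (y < L)) ->
  forall x y, delC G x y -> (x < K) && (y < L).
Proof. by move=> hs x y /hs. Qed.

Lemma delC_cnt K L (G : nat -> nat -> bool) :
  cntN K.+1 L G = \sum_(0 <= y < L) (G 0 y : nat) + cntN K L (delC G).
Proof. by rewrite /cntN big_nat_recl. Qed.

Lemma rowc_split K (G : nat -> nat -> bool) r :
  rowc K.+1 G r = G 0 r + rowc K (delC G) r.
Proof. by rewrite /rowc big_nat_recl. Qed.

Lemma sum_le_n n (f : nat -> bool) : \sum_(0 <= y < n) (f y : nat) <= n.
Proof.
apply: leq_trans (_ : \sum_(0 <= y < n) 1 <= n).
  by apply: leq_sum => y _; case: (f y).
by rewrite sum_nat_const_nat subn0 muln1.
Qed.


Lemma mainN n : forall K (G : nat -> nat -> bool) (Lam : nat -> bool), 2 <= K ->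
  (forall x y, G x y -> (x < K) && (y < n.+1)) -> freeN G -> validN G Lam ->
  (forall y, Lam y -> y.+1 < n.+1) ->
  cntN K n.+1 G + lnk n.+1 Lam <= 2 * (K + n.+1) - 4.
Proof.
elim: n => [|n IHn] K G Lam hK hs hf hv hb.
  have h1 : lnk 1 Lam = 0.
    rewrite /lnk big_nat1; case E: (Lam 0) => //; move/hb: E; lia.
  have h2 : cntN K 1 G <= K.
    rewrite /cntN; apply: leq_trans (_ : \sum_(0 <= x < K) 1 <= K).
      by apply: leq_sum => x _; rewrite big_nat1; case: (G x 0).
    by rewrite sum_nat_const_nat subn0 muln1.
  lia.
elim: K hK G Lam hs hf hv hb => [//|K IHK] hK G Lam hs hf hv hb.
case: (boolP [exists r : 'I_n.+2, linked Lam r && (rowc K.+1 G r <= 1)]).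
  case/existsP => [[r hr]] /= /andP [hl hrc].
  have := IHn K.+1 (delG r G) (delL r Lam) hK (delG_supp hr hs) (@delG_free r G hf)
            (@delG_valid r G Lam hv) (delL_bnd hr hb).
  have e1 := @delG_cnt K.+1 n r G hr.
  have e2 := @delL_lnk n r Lam hr.
  have e3 : (linked Lam r : nat) <= 1 by case: (linked Lam r).
  lia.
move/existsPn => hA'.
have hA : forall r, r < n.+2 -> linked Lam r -> 2 <= rowc K.+1 G r.
  move=> r hr hl; move: (hA' (Ordinal hr)) => /=; rewrite hl /=; lia.
case: (boolP [exists r : 'I_n.+2, ~~ linked Lam r && (rowc K.+1 G r <= 2)]).
  case/existsP => [[r hr]] /= /andP [hl hrc].
  have := IHn K.+1 (delG r G) (delL r Lam) hK (delG_supp hr hs) (@delG_free r G hf)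
            (@delG_valid r G Lam hv) (delL_bnd hr hb).
  have e1 := @delG_cnt K.+1 n r G hr.
  have e2 := @delL_lnk n r Lam hr.
  move: e2; rewrite (negbTE hl) addn0 => e2.
  lia.
move/existsPn => hB'.
have hB : forall r, r < n.+2 -> ~~ linked Lam r -> 3 <= rowc K.+1 G r.
  move=> r hr hl; move: (hB' (Ordinal hr)) => /=; rewrite hl /=; lia.
have hrowle : forall r, rowc K.+1 G r <= K.+1.
  by move=> r; rewrite /rowc; apply: sum_le_n.
case: (ltnP K 2) => hK2.
  have eK : K = 1 by lia.
  subst K.
  have hr2 : forall r, rowc 2 G r = G 0 r + G 1 r.
    by move=> r; rewrite /rowc !big_nat_recl //= big_geq // addn0.
  have hL0 : Lam 0.
    apply/negPn/negP => hn.
    have : ~~ linked Lam 0 by rewrite /linked /= (negbTE hn).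
    move/(hB 0 (ltn0Sn _)); rewrite hr2; case: (G 0 0); case: (G 1 0) => //.
  have := hA 0 (ltn0Sn _) ltac:(by rewrite /linked hL0 orbT).
  rewrite hr2; case E00: (G 0 0); case E10: (G 1 0) => // _.
  have := hA 1 ltac:(by []) ltac:(by rewrite /linked /= hL0).
  rewrite hr2; case E01: (G 0 1); case E11: (G 1 1) => // _.
  have hp : forall g, 0 <= g -> g < 1 -> Lam g.
    by move=> g _ h; have -> : g = 0 by lia.
  by have := hv 1 0 0 1 E10 E01 (ltn0Sn _) hp.
have K1 : forall c, G 0 c -> 0 < c -> ~~ Lam c.-1.
  move=> c hc hc0; apply/negP => hl.
  have hcr : c.-1 < n.+2 by move: (hs 0 c hc) => /andP [_ ]; lia.
  have := hA c.-1 hcr ltac:(by rewrite /linked hl orbT).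
  rewrite rowc_split.
  have -> : rowc K (delC G) c.-1 = 0.
    rewrite /rowc; apply: big1 => x _.
    case hx: (delC G x c.-1) => //.
    have hp : forall g, c.-1 <= g -> g < c -> Lam g.
      by move=> g h1 h2; have -> : g = c.-1 by lia.
    by have := hv x.+1 c.-1 0 c hx hc ltac:(lia) hp.
  by case: (G 0 c.-1).
set m := \sum_(0 <= y < n.+2) (G 0 y : nat).
have hvC : validN (delC G) Lam.
  by move=> px py qx qy hp hq hlt hpath; have := hv px.+1 py qx.+1 qy hp hq hlt hpath.
have ecnt := @delC_cnt K n.+2 G.
case: (leqP m 1) => hm.
  have := IHK hK2 (delC G) Lam (delC_supp hs) (delC_free hf) hvC hb.
  rewrite -/m in ecnt.
  lia.
have exG : exists y, G 0 y.
  case: (boolP [exists y : 'I_n.+2, G 0 y]).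
    by case/existsP => y hy; exists y.
  move/existsPn => hn; exfalso.
  have : m = 0.
    rewrite /m big_nat_cond; apply: big1 => y /andP [hy _].
    by move: (hn (Ordinal hy)) => /= /negbTE ->.
  lia.
have hubd : forall y, G 0 y -> y <= n.+1.
  by move=> y /(hs 0) /andP [_]; lia.
case: (ex_minnP exG) => lo hlo hlomin.
case: (ex_maxnP exG hubd) => hi hhi hhimax.
set Lam' := fun y => Lam y || ((lo <= y) && (y.+2 <= hi)).
have hb' : forall y, Lam' y -> y.+1 < n.+2.
  move=> y /orP [/hb //|/andP [h1 h2]].
  move: (hubd hi hhi); lia.
have hv' : validN (delC G) Lam'.
  move=> px py qx qy hp hq hlt hpath.
  case: (leqP lo py) => h1; case: (ltnP qy hi) => h2.
  - rewrite leqNgt; apply/negP => hlt2.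
    exact: (hf 0 lo 0 hi qx.+1 qy px.+1 py hlo hhi hq hp (leqnn 0) h1 (ltn0Sn _) hlt2 hlt h2).
  - apply: (hvC px py qx qy hp hq hlt) => g g1 g2.
    have := hpath g g1 g2; case/orP => // /andP [g3 g4].
    exfalso.
    have := hpath hi.-1 ltac:(lia) ltac:(lia).
    rewrite /Lam'; case/orP.
      by apply/negP; apply: K1 => //; lia.
    lia.
  - apply: (hvC px py qx qy hp hq hlt) => g g1 g2.
    have := hpath g g1 g2; case/orP => // /andP [g3 g4].
    exfalso.
    have := hpath lo.-1 ltac:(lia) ltac:(lia).
    rewrite /Lam'; case/orP.
      by apply/negP; apply: K1 => //; lia.
    lia.
  - apply: (hvC px py qx qy hp hq hlt) => g g1 g2.
    have := hpath g g1 g2; case/orP => // /andP [g3 g4].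
    exfalso.
    have := hpath lo.-1 ltac:(lia) ltac:(lia).
    rewrite /Lam'; case/orP.
      by apply/negP; apply: K1 => //; lia.
    lia.
set S := \sum_(0 <= c < n.+2) ((G 0 c && (lo < c) && (c < hi)) : nat).
have hS : m <= S + 2.
  have : m <= \sum_(0 <= c < n.+2) (((G 0 c && (lo < c) && (c < hi)) : nat) + (c == lo) + (c == hi)).
    apply: leq_sum => c _.
    case hc: (G 0 c) => //=.
    have := hlomin c hc; have := hhimax c hc; lia.
  rewrite !big_split /= !sum_eq1 -/S.
  lia.
have hS2 : lnk n.+2 Lam + S <= lnk n.+2 Lam'.
  have T : \sum_(0 <= y < n.+2) ((Lam y : nat) + (G 0 y.+1 && (lo < y.+1) && (y.+1 < hi)))
           <= \sum_(0 <= y < n.+2) (Lam' y : nat).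
    apply: leq_sum => y _.
    case E: (G 0 y.+1 && (lo < y.+1) && (y.+1 < hi)); last by rewrite addn0 /Lam'; case: (Lam y).
    move/andP: E => [/andP [E1 E2] E3].
    have := K1 y.+1 E1 (ltn0Sn _) => /= /negbTE ->.
    have h : Lam' y by rewrite /Lam'; apply/orP; right; apply/andP; split; lia.
    by rewrite h.
  have S1 : S = \sum_(0 <= y < n.+1) ((G 0 y.+1 && (lo < y.+1) && (y.+1 < hi)) : nat).
    by rewrite /S big_nat_recl //= ltn0 andbF.
  have S2 : \sum_(0 <= y < n.+1) ((G 0 y.+1 && (lo < y.+1) && (y.+1 < hi)) : nat)
         <= \sum_(0 <= y < n.+2) ((G 0 y.+1 && (lo < y.+1) && (y.+1 < hi)) : nat).
    by rewrite [X in _ <= X]big_nat_recr //= leq_addr.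
  rewrite big_split /= in T.
  rewrite /lnk; lia.
have := IHK hK2 (delC G) Lam' (delC_supp hs) (delC_free hf) hv' hb'.
rewrite -/m in ecnt.
lia.
Qed.

Definition bnd (k l x y : nat) := (x == 0) || (x == k.-1) || (y == 0) || (y == l.-1).
Lemma no3 (k l x1 y1 x2 y2 x3 y3 : nat) : x1 < k -> x2 < k -> x3 < k -> y1 < l -> y2 < l -> y3 < l ->
 bnd k l x1 y1 -> bnd k l x2 y2 -> bnd k l x3 y3 ->
 ~~ ((x1 <= x2) && (y1 <= y2)) -> ~~ ((x2 <= x1) && (y2 <= y1)) ->
 ~~ ((x1 <= x3) && (y1 <= y3)) -> ~~ ((x3 <= x1) && (y3 <= y1)) ->
 ~~ ((x2 <= x3) && (y2 <= y3)) -> ~~ ((x3 <= x2) && (y3 <= y2)) -> False.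
Proof. rewrite /bnd. lia. Qed.
Lemma bnd_sum k l : \sum_(0 <= x < k.+2) \sum_(0 <= y < l.+2) (bnd k.+2 l.+2 x y : nat)
   = 2 * (k.+2 + l.+2) - 4.
Proof.
have hin : forall x, 0 < x < k.+1 -> \sum_(0 <= y < l.+2) (bnd k.+2 l.+2 x y : nat) = 2.
  move=> x /andP [h1 h2].
  rewrite big_nat_recl // big_nat_recr //=.
  rewrite (@big1_seq _ _ _ _ _ _ (fun y => (bnd k.+2 l.+2 x y.+1 : nat))); last first.
    move=> y /andP [_ ]; rewrite mem_index_iota => hy.
    rewrite /bnd /=. apply/eqP; rewrite eqb0. apply/negP. lia.
  rewrite /bnd /=. lia.
have hout : forall x, (x == 0) || (x == k.+1) -> \sum_(0 <= y < l.+2) (bnd k.+2 l.+2 x y : nat) = l.+2.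
  move=> x hx.
  rewrite (eq_bigr (fun _ => 1)); last by move=> y _; rewrite /bnd /= hx.
  by rewrite sum_nat_const_nat subn0 muln1.
pose g := fun x => \sum_(0 <= y < l.+2) (bnd k.+2 l.+2 x y : nat).
have e : \sum_(0 <= x < k.+2) g x = g 0 + \sum_(0 <= x < k) g x.+1 + g k.+1.
  by rewrite big_nat_recl // big_nat_recr // addnA.
rewrite -/g e /g hout // hout ?eqxx ?orbT // -/g.
have -> : \sum_(0 <= x < k) g x.+1 = \sum_(0 <= x < k) 2.
  by apply: eq_big_nat => x hx; rewrite /g hin //; lia.
rewrite sum_nat_const_nat subn0. lia.
Qed.



Lemma card_pairs k l (F : {set grid k l}) :
  #|F| = \sum_(i < k) \sum_(j < l) (((i, j) \in F) : nat).
Proof.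
rewrite -sum1_card big_mkcond /= pair_big /=.
by apply: eq_bigr => -[i j] _ /=; case: ((i, j) \in F).
Qed.

Lemma beq (b c : bool) : (b -> c) -> (c -> b) -> b = c.
Proof. by case: b; case: c => // h1 h2; [move: (h1 isT) | move: (h2 isT)]. Qed.

Lemma witness k l (F : {set grid k l}) (a b1 b2 b3 : grid k l) :
  a \in F -> b1 \in F -> b2 \in F -> b3 \in F ->
  a.1 <= b1.1 -> a.2 <= b3.2 -> b1.1 < b2.1 -> b2.1 < b3.1 -> b3.2 < b2.2 -> b2.2 < b1.2 ->
  strong_subposet_in vee3_le (@grid_le k l) F.
Proof.
move=> ha h1 h2 h3 e1 e2 e3 e4 e5 e6.
pose i := fun p : 'I_4 => match val p with 0 => a | 1 => b1 | 2 => b2 | _ => b3 end.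
have hord : forall p q, vee3_le p q = grid_le (i p) (i q).
  rewrite /= in e1 e2 e3 e4 e5 e6.
  move=> [p hp] [q hq]; rewrite /vee3_le -val_eqE /grid_le /i /=.
  case: p hp => [|[|[|[|p]]]] hp; case: q hq => [|[|[|[|q]]]] hq //=;
  apply: beq => [h|/andP [? ?]]; first [by apply/andP; split; lia | lia].
exists i; split; last split.
- move=> p q hpq.
  have h1' := hord p q; have h2' := hord q p.
  rewrite hpq /grid_le !leqnn /= in h1' h2'.
  move: h1' h2'; rewrite /vee3_le => /orP [/eqP // | hp0] /orP [/eqP // | hq0].
  by apply/val_inj; rewrite (eqP hp0) (eqP hq0).
- by move=> [p hp]; rewrite /i /=; case: p hp => [|[|[|[|p]]]] hp.
- exact: hord.
Qed.


Definition GF k l (F : {set grid k l}) (x y : nat) : bool :=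
  [exists p in F, (p.1 == x :> nat) && (p.2 == y :> nat)].

Lemma GF_ord k l (F : {set grid k l}) (i : 'I_k) (j : 'I_l) : GF F i j = ((i, j) \in F).
Proof.
apply/existsP/idP => [[p /andP [hp /andP [/eqP h1 /eqP h2]]] | h].
  have -> : (i, j) = p.
    by case: p hp h1 h2 => p1 p2 /= hp h1 h2; congr pair; apply: val_inj.
  exact: hp.
by exists (i, j); rewrite h !eqxx.
Qed.

Lemma card_GF k l (F : {set grid k l}) : #|F| = cntN k l (GF F).
Proof.
rewrite card_pairs /cntN big_mkord; apply: eq_bigr => i _.
rewrite big_mkord; apply: eq_bigr => j _.
by rewrite GF_ord.
Qed.

Lemma GF_supp k l (F : {set grid k l}) x y : GF F x y -> (x < k) && (y < l).
Proof.
by case/existsP => p /andP [_ /andP [/eqP <- /eqP <-]]; rewrite !ltn_ord.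
Qed.

Lemma GF_free k l (F : {set grid k l}) : strong_vee3_free F -> freeN (GF F).
Proof.
move=> hF a1 a2 x1 y1 x2 y2 x3 y3 ha h1 h2 h3 e1 e2 e3 e4 e5 e6.
case/existsP: ha => pa /andP [hpa /andP [/eqP ea1 /eqP ea2]].
case/existsP: h1 => p1 /andP [hp1 /andP [/eqP ex1 /eqP ey1]].
case/existsP: h2 => p2 /andP [hp2 /andP [/eqP ex2 /eqP ey2]].
case/existsP: h3 => p3 /andP [hp3 /andP [/eqP ex3 /eqP ey3]].
apply: hF; apply: (witness hpa hp1 hp2 hp3).
all: rewrite ?ea1 ?ea2 ?ex1 ?ey1 ?ex2 ?ey2 ?ex3 ?ey3 //.
Qed.

Lemma upper k l (F : {set grid k l}) : 2 <= k -> 2 <= l -> strong_vee3_free F ->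
  #|F| <= 2 * (k + l) - 4.
Proof.
move=> hk hl hF; rewrite card_GF.
case: l hl F hF => [//|n] hl F hF.
have hv : validN (GF F) (fun _ => false).
  by move=> px py qx qy _ _ hlt /(_ py (leqnn _) hlt).
have := @mainN n k (GF F) (fun _ => false) hk (@GF_supp k n.+1 F) (GF_free hF) hv (fun y (h : false) => match notF h with end).
have -> : lnk n.+1 (fun _ => false) = 0 by rewrite /lnk big1.
by rewrite addn0.
Qed.

Definition B0 k l : {set grid k l} :=
  [set p : grid k l | bnd k l p.1 p.2].

Lemma B0_free k l : strong_vee3_free (B0 k l).
Proof.
move=> [i [hinj [hin hord]]].
pose o1 := Ordinal (isT : 1 < 4).
pose o2 := Ordinal (isT : 2 < 4).
pose o3 := Ordinal (isT : 3 < 4).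
have h12 : grid_le (i o1) (i o2) = false by rewrite -hord.
have h21 : grid_le (i o2) (i o1) = false by rewrite -hord.
have h13 : grid_le (i o1) (i o3) = false by rewrite -hord.
have h31 : grid_le (i o3) (i o1) = false by rewrite -hord.
have h23 : grid_le (i o2) (i o3) = false by rewrite -hord.
have h32 : grid_le (i o3) (i o2) = false by rewrite -hord.
have b1 := hin o1; have b2 := hin o2; have b3 := hin o3.
rewrite !inE in b1 b2 b3.
apply: (@no3 k l (i o1).1 (i o1).2 (i o2).1 (i o2).2 (i o3).1 (i o3).2);
  rewrite ?ltn_ord //; apply/negbT; assumption.
Qed.

Lemma B0_card k l : 2 <= k -> 2 <= l -> #|B0 k l| = 2 * (k + l) - 4.
Proof.
case: k => [//|[//|k]] _; case: l => [//|[//|l]] _.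
rewrite card_pairs -(bnd_sum k l) big_mkord; apply: eq_bigr => i _.
rewrite big_mkord; apply: eq_bigr => j _.
by rewrite inE.
Qed.


Theorem theorem1p5 (k l : nat) : (2 <= k)%N -> (2 <= l)%N ->
  is_La_star_grid_vee3 k l (2 * (k + l) - 4).
Proof.
move=> hk hl; split.
  by exists (B0 k l); split; [exact: B0_free | exact: B0_card].
by move=> F hF; apply: upper.
Qed.
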